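(* For any integer $n\ge4$, the $n$-cycle satisfies $\beta(C_n)=n/2$, whereas its complement satisfies $\beta(\overline{C_n})=n/\lfloor n/2\rfloor$. In both cases $\beta_1=\lceil\beta\rceil$ while $\alpha=\lfloor\beta\rfloor$.
   Context: For an undirected graph $G$ on vertex set $[n]$, consider the index coding problem: a server holds messages $x_1,\dots,x_n\in\Sigma$ ($|\Sigma|>1$), receiver $i$ wants $x_i$ and knows $x_j$ for every neighbor $j$ of $i$. A solution is an encoding $\mathcal{E}:\Sigma^n\to\Sigma_P$ from which each receiver can recover its message given its side information, for all message values. $\beta_t(G)$ is the minimum of $\lceil\log_2|\Sigma_P|\rceil$ over solutions with $|\Sigma|=2^t$; $\beta_1(G)$ is this quantity for $t=1$ and $\beta(G)=\lim_t\beta_t(G)/t=\inf_t\beta_t(G)/t$. $\alpha(G)$ is the independence number and $\overline{C_n}$ is the complement of the $n$-cycle $C_n$. *)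

(* Defs.v *)
From HB Require Import structures.
From mathcomp Require Import all_boot all_order all_algebra.
From mathcomp Require Import classical_sets reals.
Set Implicit Arguments. Unset Strict Implicit. Unset Printing Implicit Defensive.
Import Order.TTheory GRing.Theory Num.Theory.

Definition cycle_graph (n : nat) : rel 'I_n :=
  fun i j => (val j == (val i + 1) %% n) || (val i == (val j + 1) %% n).

Definition cocycle_graph (n : nat) : rel 'I_n :=
  fun i j => (i != j) && ~~ cycle_graph i j.

Definition independent (n : nat) (G : rel 'I_n) (S : {set 'I_n}) : bool :=
  [forall i in S, forall j in S, ~~ G i j].
Definition alpha (n : nat) (G : rel 'I_n) : nat :=
  \max_(S : {set 'I_n} | independent G S) #|S|.

Definition msgs (n t : nat) := {ffun 'I_n -> 'I_(2 ^ t)}.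

(* E is an index code for G: receiver i recovers x_i from E(x) and x_j for
   neighbors j, i.e. any two message vectors with the same encoding that agree
   on the neighborhood of i agree at i. *)
Definition is_index_code (n t : nat) (G : rel 'I_n) (T : finType)
    (E : {ffun msgs n t -> T}) : bool :=
  [forall i : 'I_n, forall x : msgs n t, forall y : msgs n t,
     ((E x == E y) && [forall j : 'I_n, G i j ==> (x j == y j)]) ==> (x i == y i)].

(* There is a solution whose code alphabet has at most 2^k symbols,
   i.e. with ceil(log2 |Sigma_P|) <= k. *)
Definition solvable_in (n t : nat) (G : rel 'I_n) (k : nat) : bool :=
  [exists E : {ffun msgs n t -> 'I_(2 ^ k)}, is_index_code G E].

Lemma solvable_in_exists (n t : nat) (G : rel 'I_n) :
  exists k, solvable_in t G k.
Proof.
exists (t * n).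
have hc : #|msgs n t| = 2 ^ (t * n).
  by rewrite card_ffun !card_ord expnM.
apply/existsP; exists [ffun x => cast_ord hc (enum_rank x)].
apply/forallP => i; apply/forallP => x; apply/forallP => y; apply/implyP.
case/andP => /eqP; rewrite !ffunE => /cast_ord_inj/enum_rank_inj -> _.
by [].
Qed.

Definition beta_t (n : nat) (G : rel 'I_n) (t : nat) : nat :=
  ex_minn (solvable_in_exists t G).

(* beta(G) = inf_{t >= 1} beta_t(G) / t  (= lim_t beta_t(G)/t). *)
Definition beta (R : realType) (n : nat) (G : rel 'I_n) : R :=
  inf [set ((beta_t G t)%:R / t%:R)%R | t in [set t : nat | (0 < t)%N]].

(* Main.v *)
Require Import Defs.
From HB Require Import structures.
From mathcomp Require Import all_boot all_order all_algebra.
From mathcomp Require Import classical_sets reals exp.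
From mathcomp Require Import zify ring lra.
Import Order.TTheory GRing.Theory Num.Theory.

Module M1.
Set Implicit Arguments. Unset Strict Implicit. Unset Printing Implicit Defensive.
Import Order.TTheory GRing.Theory Num.Theory.
Local Open Scope ring_scope.

Section Ent.
Variables (R : realType) (Om : finType).

Definition cnt (T : eqType) (g : Om -> T) (w : Om) : nat :=
  #|[pred w' | g w' == g w]|.
Definition Sg (T : eqType) (g : Om -> T) : R := \sum_(w : Om) ln (cnt g w)%:R.

Lemma cnt_gt0 (T : eqType) (g : Om -> T) w : (0 < cnt g w)%N.
Proof. by apply/card_gt0P; exists w; rewrite inE. Qed.

Lemma cntR_gt0 (T : eqType) (g : Om -> T) w : 0 < (cnt g w)%:R :> R.
Proof. by rewrite ltr0n cnt_gt0. Qed.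

Lemma cntE (T : eqType) (g : Om -> T) w :
  (cnt g w)%:R = \sum_(w' : Om) ((g w' == g w)%:R : R).
Proof.
rewrite /cnt -sum1_card natr_sum big_mkcond /=.
by apply: eq_bigr => w' _; rewrite inE; case: (g w' == g w).
Qed.

Lemma cnt_eq (T : eqType) (g : Om -> T) w w' : g w = g w' -> cnt g w = cnt g w'.
Proof. by move=> e; rewrite /cnt e. Qed.

Lemma ln_ge1V (y : R) : 0 < y -> 1 - y^-1 <= ln y.
Proof.
move=> y0.
have h : -1 < y^-1 - 1 by rewrite ltrBrDr addNr invr_gt0.
have := le_ln1Dx h.
rewrite addrC subrK lnV ?posrE //; lra.
Qed.

Lemma Sg_ge0 (T : eqType) (g : Om -> T) : 0 <= Sg g.
Proof. by apply: sumr_ge0 => w _; apply: ln_ge0; rewrite ler1n cnt_gt0. Qed.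

Lemma Sg_inj (T : eqType) (g : Om -> T) :
  (forall w w', g w = g w' -> w = w') -> Sg g = 0.
Proof.
move=> gi; rewrite /Sg big1 // => w _.
have -> : cnt g w = 1%N.
  rewrite /cnt -(card1 w); apply: eq_card => w'; rewrite !inE.
  by apply/eqP/eqP => [/gi|->].
by rewrite ln1.
Qed.

Lemma Sg_const (T : eqType) (c : T) :
  Sg (fun _ : Om => c) = #|Om|%:R * ln #|Om|%:R.
Proof.
rewrite /Sg /cnt.
have e : #|[pred w' : Om | c == c]| = #|Om|.
  by apply: eq_card => w'; rewrite !inE eqxx.
by rewrite e sumr_const mulr_natl.
Qed.

Lemma Sg_refine (T1 T2 : eqType) (g1 : Om -> T1) (g2 : Om -> T2) :
  (forall w w', g1 w = g1 w' -> g2 w = g2 w') -> Sg g1 <= Sg g2.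
Proof.
move=> h; apply: ler_sum => w _.
rewrite ler_ln ?posrE ?cntR_gt0 // !cntE; apply: ler_sum => w' _.
case: eqP => [/h ->|_]; first by rewrite eqxx.
by rewrite ler0n.
Qed.

Lemma sum_fiber (T : eqType) (g : Om -> T) w0 :
  \sum_(w : Om) ((g w == g w0)%:R / (cnt g w)%:R) = 1 :> R.
Proof.
have -> : \sum_(w : Om) ((g w == g w0)%:R / (cnt g w)%:R) =
          \sum_(w : Om) ((g w == g w0)%:R / (cnt g w0)%:R) :> R.
  apply: eq_bigr => w _; case: eqP => [e|_]; last by rewrite !mul0r.
  by rewrite (cnt_eq e).
by rewrite -mulr_suml -cntE divff // gt_eqF // cntR_gt0.
Qed.

Lemma sum_inv_cnt (T : finType) (g : Om -> T) :
  \sum_(w : Om) ((cnt g w)%:R)^-1 <= #|T|%:R :> R.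
Proof.
have -> : \sum_(w : Om) ((cnt g w)%:R)^-1 =
   \sum_(w : Om) \sum_(u : T) ((g w == u)%:R / (cnt g w)%:R) :> R.
  apply: eq_bigr => w _; rewrite -mulr_suml.
  rewrite (bigD1 (g w)) //= eqxx big1 ?addr0 ?mul1r // => u /negbTE.
  by rewrite eq_sym => ->.
rewrite exchange_big /= -sum1_card natr_sum ler_sum // => u _.
case: (pickP (fun w => g w == u)) => [w0 /eqP e|h].
  rewrite -e sum_fiber //.
by rewrite big1 // => w _; rewrite h mul0r.
Qed.

Lemma Sg_range (T : finType) (g : Om -> T) :
  #|Om|%:R * ln #|Om|%:R <= #|Om|%:R * ln #|T|%:R + Sg g.
Proof.
case: (posnP #|Om|) => [->|Mpos]; first by rewrite !mul0r add0r Sg_ge0.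
have [w0 _] : exists w0 : Om, w0 \in Om by apply/card_gt0P.
have Tpos : (0 < #|T|)%N by apply/card_gt0P; exists (g w0).
set M : R := #|Om|%:R.
have M0 : 0 < M by rewrite ltr0n.
have T0 : 0 < #|T|%:R :> R by rewrite ltr0n.
have key : \sum_(w : Om) (1 - M / ((cnt g w)%:R * #|T|%:R)) <=
           \sum_(w : Om) ln ((cnt g w)%:R * #|T|%:R / M).
  apply: ler_sum => w _.
  have p : 0 < (cnt g w)%:R * #|T|%:R / M by rewrite divr_gt0 // mulr_gt0 // cntR_gt0.
  by have := ln_ge1V p; rewrite invf_div.
have e1 : \sum_(w : Om) ln ((cnt g w)%:R * #|T|%:R / M) =
          Sg g + M * ln #|T|%:R - M * ln M.
  have t : forall w, ln ((cnt g w)%:R * #|T|%:R / M) =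
                     ln (cnt g w)%:R + (ln #|T|%:R - ln M).
    move=> w; have c0 := cntR_gt0 g w.
    rewrite ln_div ?posrE ?mulr_gt0 // lnM ?posrE //.
    by rewrite addrA.
  rewrite (eq_bigr _ (fun w _ => t w)) big_split /= sumr_const.
  rewrite /Sg -/M [X in _ + X = _](_ : _ = M * (ln #|T|%:R - ln M)); last first.
    by rewrite /M mulr_natl.
  by rewrite mulrBr addrA.
have e2 : \sum_(w : Om) (1 - M / ((cnt g w)%:R * #|T|%:R)) =
          M - M / #|T|%:R * \sum_(w : Om) ((cnt g w)%:R)^-1.
  have t : forall w, M / ((cnt g w)%:R * #|T|%:R) = M / #|T|%:R * ((cnt g w)%:R)^-1.
    by move=> w; rewrite invfM mulrA mulrAC.
  rewrite big_split /= sumr_const sumrN (eq_bigr _ (fun w _ => t w)) -mulr_sumr.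
  by [].
have e3 := sum_inv_cnt g.
have e4 : M / #|T|%:R * \sum_(w : Om) ((cnt g w)%:R)^-1 <= M.
  rewrite -[X in _ <= X]mulr1 -mulrA ler_pM2l //.
  by rewrite ler_pdivrMl // mulr1.
lra.
Qed.

End Ent.

End M1.
Import M1.

Module M2.
Set Implicit Arguments. Unset Strict Implicit. Unset Printing Implicit Defensive.
Import Order.TTheory GRing.Theory Num.Theory.
Local Open Scope ring_scope.

Section Ent2.
Variables (R : realType) (Om : finType).

Lemma comb_ineq (A B C : eqType) (a : Om -> A) (b : Om -> B) (c : Om -> C) :
  (forall w w', a w = a w' -> c w = c w') ->
  (forall w w', b w = b w' -> c w = c w') ->
  \sum_(w : Om) ((cnt a w)%:R * (cnt b w)%:R /
        ((cnt (fun w => (a w, b w)) w)%:R * (cnt c w)%:R)) <= #|Om|%:R :> R.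
Proof.
move=> hac hbc.
set ab := fun w => (a w, b w).
set F := fun w w1 w2 => ((a w1 == a w)%:R * (b w2 == b w)%:R /
                           ((cnt ab w)%:R * (cnt c w)%:R)) : R.
have t : forall w, (cnt a w)%:R * (cnt b w)%:R /
        ((cnt ab w)%:R * (cnt c w)%:R) = \sum_(w1 : Om) \sum_(w2 : Om) F w w1 w2.
  move=> w; rewrite (@cntE R _ _ a w) (@cntE R _ _ b w) -mulrA mulr_suml; apply: eq_bigr => w1 _.
  rewrite mulr_suml mulr_sumr; apply: eq_bigr => w2 _.
  by rewrite /F mulrA.
rewrite (eq_bigr _ (fun w _ => t w)) exchange_big /=.
have inner : forall w1 w2, \sum_(w : Om) F w w1 w2 <=
                  (c w2 == c w1)%:R / (cnt c w1)%:R.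
  move=> w1 w2.
  case: (pickP (fun w => (a w == a w1) && (b w == b w2))) => [w0 /andP[/eqP e1 /eqP e2]|hn].
  - have ec : c w2 = c w1 by rewrite -(hbc _ _ e2) (hac _ _ e1).
    have tF : forall w, F w w1 w2 =
        (ab w == ab w0)%:R / (cnt ab w)%:R / (cnt c w1)%:R.
      move=> w; rewrite /F /ab xpair_eqE e1 e2 [a w == a w1]eq_sym [b w == b w2]eq_sym.
      case: (a w1 =P a w) => [ea|na]; case: (b w2 =P b w) => [eb|nb] /=;
        rewrite ?(mul0r, mulr0, mul1r) //.
      by rewrite (cnt_eq (hac _ _ (esym ea))) invfM.
    rewrite (eq_bigr _ (fun w _ => tF w)) -mulr_suml sum_fiber ec eqxx mul1r.
    by [].
  - rewrite big1 ?divr_ge0 ?ler0n // => w _.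
    rewrite /F; case: (a w1 =P a w) => [ea|na]; case: (b w2 =P b w) => [eb|nb] /=;
      rewrite ?(mul0r, mulr0, mul1r) //.
    by have := hn w; rewrite -ea -eb !eqxx.
have eT : forall w1, \sum_(w2 : Om) (c w2 == c w1)%:R / (cnt c w1)%:R = 1 :> R.
  by move=> w1; rewrite -mulr_suml -cntE divff // gt_eqF // cntR_gt0.
have -> : #|Om|%:R = \sum_(w1 : Om) \sum_(w2 : Om) (c w2 == c w1)%:R / (cnt c w1)%:R :> R.
  by rewrite (eq_bigr _ (fun w1 _ => eT w1)) sumr_const.
apply: ler_sum => w1 _; rewrite exchange_big /=; apply: ler_sum => w2 _.
exact: inner.
Qed.


Lemma Sg_submod (A B C : eqType) (a : Om -> A) (b : Om -> B) (c : Om -> C) :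
  (forall w w', a w = a w' -> c w = c w') ->
  (forall w w', b w = b w' -> c w = c w') ->
  Sg R a + Sg R b <= Sg R (fun w => (a w, b w)) + Sg R c.
Proof.
move=> hac hbc.
set ab := fun w => (a w, b w).
have hcomb := comb_ineq hac hbc.
set X := fun w => ((cnt a w)%:R * (cnt b w)%:R /
        ((cnt ab w)%:R * (cnt c w)%:R)) : R.
have Xp : forall w, 0 < X w.
  by move=> w; rewrite /X divr_gt0 // mulr_gt0 // cntR_gt0.
have key : \sum_(w : Om) (1 - X w) <= \sum_(w : Om) ln ((X w)^-1).
  apply: ler_sum => w _; have p : 0 < (X w)^-1 by rewrite invr_gt0.
  by have := ln_ge1V p; rewrite invrK.
have e1 : forall w, ln ((X w)^-1) =
     ln (cnt ab w)%:R + ln (cnt c w)%:R - ln (cnt a w)%:R - ln (cnt b w)%:R.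
  move=> w; rewrite /X invf_div.
  have h1 := cntR_gt0 R a w; have h2 := cntR_gt0 R b w.
  have h3 := cntR_gt0 R ab w; have h4 := cntR_gt0 R c w.
  rewrite ln_div ?posrE ?mulr_gt0 // !lnM ?posrE //.
  by rewrite opprD addrA.
have e2 : \sum_(w : Om) ln ((X w)^-1) = Sg R ab + Sg R c - Sg R a - Sg R b.
  rewrite /Sg -big_split -!sumrB; apply: eq_bigr => w _; exact: e1 w.
have e3 : \sum_(w : Om) (1 - X w) = #|Om|%:R - \sum_(w : Om) X w.
  by rewrite sumrB sumr_const.
rewrite e2 e3 in key.
have : 0 <= #|Om|%:R - \sum_(i : Om) X i by rewrite subr_ge0.
lra.
Qed.

End Ent2.

End M2.
Import M2.

Module M3.
Set Implicit Arguments. Unset Strict Implicit. Unset Printing Implicit Defensive.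
Import Order.TTheory GRing.Theory Num.Theory.
Local Open Scope ring_scope.

Section Code.
Variables (R : realType) (n t k : nat) (G : rel 'I_n)
  (E : {ffun msgs n t -> 'I_(2 ^ k)}) (hE : is_index_code G E).

Definition proj (A : {set 'I_n}) (w : msgs n t) :
  {ffun {i : 'I_n | i \in A} -> 'I_(2 ^ t)} := [ffun i => w (val i)].

Definition gA (A : {set 'I_n}) (w : msgs n t) := (E w, proj A w).

Lemma proj_eq A w w' : proj A w = proj A w' <-> {in A, forall i, w i = w' i}.
Proof.
split=> [e i iA|h].
  have := congr1 (fun f : {ffun {i : 'I_n | i \in A} -> 'I_(2 ^ t)} =>
     f (exist (fun x : 'I_n => x \in A) i iA)) e.
  by rewrite !ffunE.
by rewrite /proj; apply: eq_ffun => -[i iA] /=; apply: h.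
Qed.

Lemma decode x y i : E x = E y -> (forall j, G i j -> x j = y j) -> x i = y i.
Proof.
move=> e h; have := hE; rewrite /is_index_code.
move=> /forallP /(_ i) /forallP /(_ x) /forallP /(_ y) /implyP H.
apply/eqP; apply: H; rewrite e eqxx /=; apply/forallP => j.
by apply/implyP => /h ->.
Qed.

Definition D : R := #|msgs n t|%:R * ln 2.
Definition h (T : eqType) (g : msgs n t -> T) : R := Sg R g / D.

Lemma ln2_gt0 : 0 < ln (2 : R).
Proof. by apply: ln_gt0; rewrite ltr1n. Qed.

Lemma card_Om : #|msgs n t| = ((2 ^ t) ^ n)%N.
Proof. by rewrite card_ffun !card_ord. Qed.

Lemma M_gt0 : (0 < #|msgs n t|)%N.
Proof. by rewrite card_Om expn_gt0 expn_gt0. Qed.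

Lemma D_gt0 : 0 < D.
Proof. by rewrite /D mulr_gt0 ?ln2_gt0 // ltr0n M_gt0. Qed.

Lemma ln_pow2 j : ln ((2 ^ j)%N%:R : R) = j%:R * ln 2.
Proof. by rewrite natrX lnXn // mulr_natl. Qed.

Lemma lnM_E : ln (#|msgs n t|%:R : R) = (t * n)%:R * ln 2.
Proof. by rewrite card_Om -expnM ln_pow2. Qed.

Lemma h_range (T : finType) (g : msgs n t -> T) j :
  #|T| = (2 ^ j)%N -> (t * n)%:R <= j%:R + h g.
Proof.
move=> cT; rewrite /h -(ler_pM2r D_gt0) mulrDl divfK ?gt_eqF ?D_gt0 //.
have := Sg_range R g; rewrite cT lnM_E ln_pow2 /D.
by rewrite !mulrA ![_ * #|_|%:R]mulrC.
Qed.

Lemma h_const : h (fun _ : msgs n t => tt) = (t * n)%:R.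
Proof.
rewrite /h Sg_const lnM_E /D mulrCA mulfK // gt_eqF // mulr_gt0 ?ln2_gt0 //.
by rewrite ltr0n M_gt0.
Qed.

Lemma h_ge0 (T : eqType) (g : msgs n t -> T) : 0 <= h g.
Proof. by rewrite /h divr_ge0 ?Sg_ge0 // ltW // D_gt0. Qed.

Lemma h_inj (T : eqType) (g : msgs n t -> T) :
  (forall w w', g w = g w' -> w = w') -> h g = 0.
Proof. by move=> gi; rewrite /h Sg_inj // mul0r. Qed.

Lemma h_refine (T1 T2 : eqType) (g1 : msgs n t -> T1) (g2 : msgs n t -> T2) :
  (forall w w', g1 w = g1 w' -> g2 w = g2 w') -> h g1 <= h g2.
Proof. by move=> hh; rewrite /h ler_pM2r ?invr_gt0 ?D_gt0 // Sg_refine. Qed.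

Lemma h_submod (A B C : eqType) (a : msgs n t -> A) (b : msgs n t -> B)
    (c : msgs n t -> C) :
  (forall w w', a w = a w' -> c w = c w') ->
  (forall w w', b w = b w' -> c w = c w') ->
  h a + h b <= h (fun w => (a w, b w)) + h c.
Proof.
move=> ha hb; rewrite /h -!mulrDl ler_pM2r ?invr_gt0 ?D_gt0 //.
exact: Sg_submod.
Qed.

Lemma h_proj (A : {set 'I_n}) : (t * n)%:R <= (t * #|A|)%:R + h (proj A).
Proof.
apply: h_range.
have cA : #|[pred x : 'I_n | x \in A]| = #|A| by apply: eq_card.
by rewrite card_ffun card_ord card_sig cA -expnM.
Qed.

Lemma h_E : (t * n)%:R <= k%:R + h E.
Proof. by apply: h_range; rewrite card_ord. Qed.

End Code.

End M3.
Import M3.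

Module M4.
Set Implicit Arguments. Unset Strict Implicit. Unset Printing Implicit Defensive.
Import Order.TTheory GRing.Theory Num.Theory.
Local Open Scope ring_scope.

Section Code2.
Variables (R : realType) (n t k : nat) (G : rel 'I_n)
  (E : {ffun msgs n t -> 'I_(2 ^ k)}) (hE : is_index_code G E).

Local Notation hh := (h R (n:=n) (t:=t)).

Lemma gA_eq A w w' :
  gA E A w = gA E A w' <-> E w = E w' /\ {in A, forall i, w i = w' i}.
Proof.
rewrite /gA; split=> [[e1 /proj_eq e2]|[e1 e2]] //.
by rewrite e1; congr pair; apply/proj_eq.
Qed.

Lemma h_gA_lb (A : {set 'I_n}) : hh E - (t * #|A|)%:R <= hh (gA E A).
Proof.
have H : hh E + hh (proj A) <= hh (gA E A) + hh (fun _ : msgs n t => tt).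
  exact: (@h_submod R n t _ _ _ (fun w => E w) (proj A) (fun _ => tt) (fun _ _ _ => erefl) (fun _ _ _ => erefl)).
have := h_proj R t A; rewrite h_const in H; lra.
Qed.

Lemma h_closure (A B : {set 'I_n}) :
  (forall v, v \in B -> v \notin A -> forall j, G v j -> j \in A) ->
  hh (gA E A) <= hh (gA E B).
Proof.
move=> hc; apply: h_refine => w w' /gA_eq [e1 e2]; apply/gA_eq; split=> // v vB.
case vA: (v \in A); first exact: e2.
apply: (decode hE) => // j /(hc v vB (negbT vA)); exact: e2.
Qed.

Lemma gA_inj (A : {set 'I_n}) :
  (forall v, v \notin A -> forall j, G v j -> j \in A) ->
  forall w w', gA E A w = gA E A w' -> w = w'.
Proof.
move=> hc w w' /gA_eq [e1 e2]; apply/ffunP => v.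
case vA: (v \in A); first exact: e2.
apply: (decode hE) => // j /(hc v (negbT vA)); exact: e2.
Qed.

Lemma h_gA_inj (A : {set 'I_n}) :
  (forall v, v \notin A -> forall j, G v j -> j \in A) -> hh (gA E A) = 0.
Proof. by move=> hc; apply: h_inj; apply: gA_inj. Qed.

Lemma h_pair (A B C : {set 'I_n}) :
  C \subset A -> C \subset B ->
  (forall v, v \notin A :|: B -> forall j, G v j -> j \in A :|: B) ->
  hh (gA E A) + hh (gA E B) <= hh (gA E C).
Proof.
move=> /fintype.subsetP CA /fintype.subsetP CB hc.
have H : hh (gA E A) + hh (gA E B) <=
   hh (fun w => (gA E A w, gA E B w)) + hh (gA E C).
  apply: h_submod => w w' /gA_eq [e1 e2]; apply/gA_eq; split=> // i iC.
    by apply: e2; apply: CA.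
  by apply: e2; apply: CB.
have Hi : forall w w', (gA E A w, gA E B w) = (gA E A w', gA E B w') -> w = w'.
  move=> w w' e.
  have /gA_eq [e1 e2] := congr1 fst e.
  have /gA_eq [_ e3] := congr1 snd e.
  apply: (gA_inj hc); apply/gA_eq; split=> // i; rewrite inE => /orP[].
    exact: e2.
  exact: e3.
by rewrite (h_inj R Hi) add0r in H.
Qed.

Lemma h_upper (A Z : {set 'I_n}) :
  (forall v, v \notin A :|: Z -> forall j, G v j -> j \in A :|: Z) ->
  hh (gA E A) <= (t * #|Z|)%:R.
Proof.
move=> hc.
have H : hh (gA E A) + hh (proj Z) <=
   hh (fun w => (gA E A w, proj Z w)) + hh (fun _ : msgs n t => tt).
  exact: (@h_submod R n t _ _ _ (gA E A) (proj Z) (fun _ => tt) (fun _ _ _ => erefl) (fun _ _ _ => erefl)).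
have Hi : forall w w', (gA E A w, proj Z w) = (gA E A w', proj Z w') -> w = w'.
  move=> w w' e.
  have /gA_eq [e1 e2] := congr1 fst e.
  have /proj_eq e3 := congr1 snd e.
  apply: (gA_inj hc); apply/gA_eq; split=> // i; rewrite inE => /orP[].
    exact: e2.
  exact: e3.
rewrite (h_inj R Hi) add0r h_const in H.
have := h_proj R t Z; lra.
Qed.

Lemma indep_bound (S : {set 'I_n}) :
  (forall v, v \in S -> forall j, G v j -> j \notin S) -> (t * #|S| <= k)%N.
Proof.
move=> hS.
have h0 : hh (gA E (~: S)) = 0.
  apply: h_gA_inj => v; rewrite inE negbK => vS j /(hS v vS).
  by rewrite inE.
have h1 := h_gA_lb (~: S); rewrite h0 in h1.
have h2 := h_E R E.
have cS : #|~: S| = (n - #|S|)%N by rewrite (cardsCs (~: S)) finset.setCK card_ord.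
have leS : (#|S| <= n)%N by have := max_card (mem S); rewrite card_ord.
rewrite cS in h1.
have : (t * n)%:R <= (k + t * (n - #|S|))%:R :> R.
  rewrite natrD; lra.
rewrite ler_nat => hh2.
have e : (t * n = t * (n - #|S|) + t * #|S|)%N by rewrite -mulnDr subnK.
lia.
Qed.

End Code2.

End M4.
Import M4.

Module M5.
Set Implicit Arguments. Unset Strict Implicit. Unset Printing Implicit Defensive.
Import Order.TTheory GRing.Theory Num.Theory.

Lemma modS_cases (a n : nat) : (a < n)%N -> ((a + 1) %% n = if a + 1 == n then 0 else a + 1)%N.
Proof.
move=> an; case: eqP => [->|ne]; first by rewrite modnn.
by rewrite modn_small //; lia.
Qed.

Lemma cycle_inv n (i j : 'I_n) : cycle_graph i j ->
  (nat_of_ord j = nat_of_ord i + 1 \/ nat_of_ord i = nat_of_ord j + 1 \/ (nat_of_ord i = n - 1 /\ nat_of_ord j = 0) \/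
   (nat_of_ord j = n - 1 /\ nat_of_ord i = 0))%N.
Proof.
have hi := ltn_ord i; have hj := ltn_ord j.
rewrite /cycle_graph /= !modS_cases //.
case/orP => /eqP; case: eqP => e1 e2; lia.
Qed.

Lemma cycle_succ n (i j : 'I_n) : (nat_of_ord j = i + 1)%N -> cycle_graph i j.
Proof.
move=> e; have hj := ltn_ord j; rewrite /cycle_graph /= (modS_cases (ltn_ord i)).
by case: (nat_of_ord i + 1 =P n)%N => [h|_]; [exfalso; lia|rewrite e eqxx].
Qed.

Lemma cycle_sym n (i j : 'I_n) : cycle_graph i j = cycle_graph j i.
Proof. by rewrite /cycle_graph /= orbC. Qed.

Lemma cycle_wrap n (i j : 'I_n) : (nat_of_ord i = n - 1)%N -> (nat_of_ord j = 0)%N -> cycle_graph i j.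
Proof.
move=> ei ej; have hi := ltn_ord i; rewrite /cycle_graph /= modS_cases //.
by case: (nat_of_ord i + 1 =P n)%N => [_|h]; [rewrite ej eqxx|exfalso; lia].
Qed.

Lemma card_le n (A : {set 'I_n}) (c : nat) (f : nat -> nat) :
  (forall i j, i \in A -> j \in A -> f (nat_of_ord i) = f (nat_of_ord j) -> nat_of_ord i = nat_of_ord j) ->
  (forall i, i \in A -> (f (nat_of_ord i) < c)%N) -> (#|A| <= c)%N.
Proof.
move=> finj fc.
rewrite cardE -(size_map (fun i => f (nat_of_ord i))) -[c](size_iota 0).
apply: uniq_leq_size.
  rewrite map_inj_in_uniq ?enum_uniq // => i j; rewrite !mem_enum => iA jA e.
  by apply: val_inj; apply: finj.
move=> x /mapP [i]; rewrite mem_enum => iA ->.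
by rewrite mem_iota add0n fc.
Qed.

Lemma solvable_inP n t k (G : rel 'I_n) : solvable_in t G k ->
  exists E : {ffun msgs n t -> 'I_(2 ^ k)}, is_index_code G E.
Proof. by move/existsP. Qed.

Local Open Scope ring_scope.
Section LBcycle.
Variables (R : realType) (m n t k : nat) (hn : n = (2 * m + 1)%N) (m2 : (2 <= m)%N).

Lemma lb_cycle_odd : solvable_in t (@cycle_graph n) k -> (t * n <= 2 * k)%N.
Proof.
move=> /solvable_inP [E hE].
pose A := [set i : 'I_n | ((i %% 2 == 0) && (i <= 2 * m - 2))%N].
pose P := [set i : 'I_n | (i <= 2 * m - 2)%N].
pose B := [set i : 'I_n | ((i %% 2 == 1) && (i <= 2 * m - 1))%N].
pose Q := [set i : 'I_n | ((1 <= i) && (i <= 2 * m - 1))%N].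
pose K := [set i : 'I_n | ((1 <= i) && (i <= 2 * m - 2))%N].
pose Z := [set i : 'I_n | (nat_of_ord i == 2 * m)%N].
have ho := ltn_ord.
have h1 : h R (gA E A) <= h R (gA E P).
  apply: (h_closure R hE) => v; rewrite /P /A !inE => vP vA j /cycle_inv H.
  by rewrite inE; have := ho _ v; have := ho _ j; lia.
have h2 : h R (gA E B) <= h R (gA E Q).
  apply: (h_closure R hE) => v; rewrite /B /Q !inE => vP vA j /cycle_inv H.
  by rewrite inE; have := ho _ v; have := ho _ j; lia.
have h3 : h R (gA E P) + h R (gA E Q) <= h R (gA E K).
  apply: (h_pair R hE).
  - by apply/fintype.subsetP => v; rewrite /K /P !inE; lia.
  - by apply/fintype.subsetP => v; rewrite /K /Q !inE; lia.
  move=> v; rewrite /P /Q !inE => vPQ j /cycle_inv H.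
  by rewrite !inE; have := ho _ v; have := ho _ j; lia.
have h4 : h R (gA E K) <= (t * #|Z|)%:R.
  apply: (h_upper R hE) => v; rewrite /K /Z !inE => vKZ j /cycle_inv H.
  by rewrite !inE; have := ho _ v; have := ho _ j; lia.
have h5 := h_gA_lb R E A.
have h6 := h_gA_lb R E B.
have h7 := h_E R E.
have cA : (#|A| <= m)%N.
  apply: (card_le (f := fun i => (i %/ 2)%N)) => [i j|i]; rewrite /A !inE.
    by have := ho _ i; have := ho _ j; lia.
  by have := ho _ i; lia.
have cB : (#|B| <= m)%N.
  apply: (card_le (f := fun i => (i %/ 2)%N)) => [i j|i]; rewrite /B !inE.
    by have := ho _ i; have := ho _ j; lia.
  by have := ho _ i; lia.
have cZ : (#|Z| <= 1)%N.
  apply: (card_le (f := fun i => 0%N)) => [i j|i]; rewrite /Z !inE //.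
  by move=> /eqP -> /eqP ->.
have rA : ((t * #|A|)%:R <= (t * m)%:R :> R) by rewrite ler_nat leq_mul2l cA orbT.
have rB : ((t * #|B|)%:R <= (t * m)%:R :> R) by rewrite ler_nat leq_mul2l cB orbT.
have rZ : ((t * #|Z|)%:R <= t%:R :> R).
  by rewrite ler_nat -[X in (_ <= X)%N]muln1 leq_mul2l cZ orbT.
have en : ((t * n)%:R = 2 * (t * m)%:R + t%:R :> R).
  by rewrite hn -natrM -natrD; congr (_%:R); lia.
have : ((t * n)%:R <= (2 * k)%:R :> R).
  rewrite natrM; lra.
by rewrite ler_nat.
Qed.
End LBcycle.

Section LBcocycle.
Variables (R : realType) (m n t k : nat) (hn : n = (2 * m + 1)%N) (m2 : (2 <= m)%N).

Lemma lb_cocycle_odd : solvable_in t (@cocycle_graph n) k -> (t * n <= m * k)%N.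
Proof.
move=> /solvable_inP [E hE].
have ho := ltn_ord.
pose Y := fun s : nat => [set i : 'I_n | ~~ ((i %% 2 == 0) && (i <= 2 * s))%N].
pose X : R := (t * (n - 3))%:R.
have chain : forall s, (s <= m)%N ->
    s%:R * (h R E - X) <= h R (gA E (Y s)).
  elim=> [|s IH] Hs; first by rewrite mul0r h_ge0.
  pose Pp := [set i : 'I_n | ((nat_of_ord i != 2 * s) && (nat_of_ord i != 2 * s + 2))%N].
  pose Ap := [set i : 'I_n | [&& nat_of_ord i != 2 * s, nat_of_ord i != 2 * s + 1 &
                                  nat_of_ord i != 2 * s + 2]%N].
  have hp : h R (gA E (Y s)) + h R (gA E Pp) <= h R (gA E (Y s.+1)).
    apply: (h_pair R hE).
    - by apply/fintype.subsetP => v; rewrite /Y !inE; lia.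
    - by apply/fintype.subsetP => v; rewrite /Y /Pp !inE; lia.
    move=> v; rewrite /Y /Pp !inE => vYP j /andP [/eqP nvj _].
    have nvj' : (nat_of_ord v <> j) by move=> e; apply: nvj; apply: val_inj.
    by rewrite !inE; have := ho _ v; have := ho _ j; lia.
  have hc : h R (gA E Ap) <= h R (gA E Pp).
    apply: (h_closure R hE) => v; rewrite /Pp /Ap !inE => vP vA j.
    move=> /andP [/eqP nvj ncyc].
    have nvj' : (nat_of_ord v <> j) by move=> e; apply: nvj; apply: val_inj.
    have ev : nat_of_ord v = (2 * s + 1)%N by lia.
    have n1 : nat_of_ord j <> (2 * s + 2)%N.
      by move=> e; move/negP: ncyc; apply; apply: cycle_succ; lia.
    have n2 : nat_of_ord j <> (2 * s)%N.
      by move=> e; move/negP: ncyc; apply; rewrite cycle_sym; apply: cycle_succ; lia.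
    by rewrite !inE; lia.
  have hl := h_gA_lb R E Ap.
  have cAp : (#|Ap| <= n - 3)%N.
    apply: (card_le (f := fun i => if (i < 2 * s)%N then i else (i - 3)%N)) => [i j|i];
      rewrite /Ap !inE; have := ho _ i; [have := ho _ j|]; do ? case: ifP; lia.
  have rA : ((t * #|Ap|)%:R <= X :> R) by rewrite ler_nat leq_mul2l cAp orbT.
  have IH' := IH (ltnW Hs).
  rewrite -natr1 mulrDl mul1r; lra.
have hYm := chain m (leqnn m).
pose Z0 := [set i : 'I_n | [&& i %% 2 == 0, 2 <= i & i <= 2 * m - 2]%N].
have hu : h R (gA E (Y m)) <= (t * #|Z0|)%:R.
  apply: (h_upper R hE) => v; rewrite /Y /Z0 !inE => vYZ j.
  move=> /andP [/eqP nvj ncyc].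
  have nvj' : (nat_of_ord v <> j) by move=> e; apply: nvj; apply: val_inj.
  have n1 : ~ (nat_of_ord v = 2 * m /\ nat_of_ord j = 0)%N.
    by move=> [e1 e2]; move/negP: ncyc; apply; apply: cycle_wrap; lia.
  have n2 : ~ (nat_of_ord v = 0 /\ nat_of_ord j = 2 * m)%N.
    by move=> [e1 e2]; move/negP: ncyc; apply; rewrite cycle_sym; apply: cycle_wrap; lia.
  by rewrite !inE; have := ho _ v; have := ho _ j; lia.
have cZ : (#|Z0| <= m - 1)%N.
  apply: (card_le (f := fun i => (i %/ 2 - 1)%N)) => [i j|i]; rewrite /Z0 !inE.
    by have := ho _ i; have := ho _ j; lia.
  by have := ho _ i; lia.
have rZ : ((t * #|Z0|)%:R <= (t * (m - 1))%:R :> R) by rewrite ler_nat leq_mul2l cZ orbT.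
have h7 := h_E R E.
have h7m : m%:R * (t * n)%:R <= m%:R * (k%:R + h R E) :> R.
  by rewrite ler_wpM2l // ler0n.
rewrite mulrBr in hYm; rewrite mulrDr in h7m.
have : (m * (t * n))%:R <= (m * k + t * (m - 1) + m * (t * (n - 3)))%:R :> R.
  rewrite !natrD !natrM -/X -natrM; rewrite natrM in h7m; lra.
rewrite ler_nat => H.
have e3 : (m * (t * (n - 3)) = m * t * (2 * m - 2))%N by rewrite hn; lia.
rewrite e3 in H; nia.
Qed.
End LBcocycle.

End M5.
Import M5.

Module M6.
Set Implicit Arguments. Unset Strict Implicit. Unset Printing Implicit Defensive.

Lemma card_bits t : #|{: {ffun 'I_t -> bool}}| = (2 ^ t)%N.
Proof. by rewrite card_ffun card_bool card_ord. Qed.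

Definition bitsOf t (x : 'I_(2 ^ t)) : {ffun 'I_t -> bool} :=
  enum_val (cast_ord (esym (card_bits t)) x).

Lemma bitsOf_inj t : injective (@bitsOf t).
Proof. by move=> x y /enum_val_inj /cast_ord_inj. Qed.

Definition ofBits k (b : {ffun 'I_k -> bool}) : 'I_(2 ^ k) :=
  cast_ord (card_bits k) (enum_rank b).

Lemma ofBits_inj k : injective (@ofBits k).
Proof. by move=> x y /cast_ord_inj /enum_rank_inj. Qed.

Section Xor.
Variables (n t k : nat) (G : rel 'I_n) (L : 'I_k -> pred ('I_n * 'I_t)).

Definition xorbit (x : msgs n t) (b : 'I_k) : bool :=
  \big[addb/false]_(p | L b p) bitsOf (x p.1) p.2.

Definition xcode : {ffun msgs n t -> 'I_(2 ^ k)} :=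
  [ffun x => ofBits [ffun b => xorbit x b]].

Hypothesis Hdec : forall v r, exists b, L b (v, r) /\
  forall p, L b p -> p = (v, r) \/ G v p.1.

Lemma xcode_ok : is_index_code G xcode.
Proof.
apply/forallP => v; apply/forallP => x; apply/forallP => y; apply/implyP.
case/andP => /eqP; rewrite !ffunE => /ofBits_inj eB /forallP hn.
have hn' : forall j, G v j -> x j = y j.
  by move=> j gj; have := hn j; rewrite gj => /eqP.
apply/eqP; apply: bitsOf_inj; apply/ffunP => r.
have [b [Lb hb]] := Hdec v r.
have := congr1 (fun f : {ffun 'I_k -> bool} => f b) eB; rewrite !ffunE /xorbit.
rewrite (bigD1 (v, r)) //= [X in _ = X](bigD1 (v, r)) //=.
have -> : \big[addb/false]_(p | L b p && (p != (v, r))) bitsOf (x p.1) p.2 =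
          \big[addb/false]_(p | L b p && (p != (v, r))) bitsOf (y p.1) p.2.
  apply: eq_bigr => p /andP[Lp np]; case: (hb p Lp) => [e|gp].
    by rewrite e eqxx in np.
  by rewrite hn'.
by case: (bitsOf (x v) r); case: (bitsOf (y v) r); case: (\big[addb/false]_(_ | _) _).
Qed.

Lemma xcode_solvable : solvable_in t G k.
Proof. by apply/existsP; exists xcode; exact: xcode_ok. Qed.

End Xor.

Lemma clique_cover_solvable n k (G : rel 'I_n) (c : 'I_n -> 'I_k) :
  (forall i j, c i = c j -> i != j -> G i j) -> solvable_in 1 G k.
Proof.
move=> hc; apply: (@xcode_solvable n 1 k G (fun b p => c p.1 == b)).
move=> v r; exists (c v); split=> // -[u s] /= /eqP e.
case: (eqVneq u v) => [->|nuv]; last by right; apply: hc => //; rewrite eq_sym.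
left; congr pair; apply/val_inj; case: s {e}; case: r => [[]//? []//?].
Qed.

End M6.
Import M6.

Module M7.
Set Implicit Arguments. Unset Strict Implicit. Unset Printing Implicit Defensive.

Lemma pair_eq2 n (v u : 'I_n) (r s : 'I_2) :
  u = v -> nat_of_ord s = nat_of_ord r -> (u, s) = (v, r).
Proof. by move=> -> e; congr pair; apply: val_inj. Qed.

Lemma code_cycle2 n : (3 <= n)%N -> solvable_in 2 (@cycle_graph n) n.
Proof.
move=> n3.
apply: (@xcode_solvable n 2 n _ (fun b p =>
  ((p.1 == b) && (nat_of_ord p.2 == 0%N)) || ((p.1 == ordS b) && (nat_of_ord p.2 == 1%N)))).
move=> v r; have hr := ltn_ord r.
have cS : forall w : 'I_n, cycle_graph w (ordS w).
  by move=> w; rewrite /cycle_graph /= addn1 ?eqxx.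
case: (nat_of_ord r =P 0%N) => [r0|r1].
  exists v; split; first by rewrite /= eqxx r0.
  move=> [u s] /= /orP [/andP [/eqP -> /eqP s0]|/andP [/eqP -> _]].
    by left; apply: pair_eq2 => //; rewrite s0 r0.
  by right; apply: cS.
have r1' : nat_of_ord r = 1%N by lia.
exists (ord_pred v); split; first by rewrite /= ord_predK eqxx r1' eqxx orbT.
move=> [u s] /= /orP [/andP [/eqP -> _]|/andP [/eqP -> /eqP s1]].
  right; rewrite cycle_sym; have := cS (ord_pred v); by rewrite ord_predK.
by left; apply: pair_eq2 => //; [rewrite ord_predK | rewrite s1 r1'].
Qed.

Lemma half_lt n (i : 'I_n) : (i./2 < uphalf n)%N.
Proof. have := ltn_ord i; rewrite uphalfE -!divn2; lia. Qed.

Lemma code_cycle1 n : solvable_in 1 (@cycle_graph n) (uphalf n).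
Proof.
apply: (@clique_cover_solvable n (uphalf n) _ (fun i => Ordinal (half_lt i))).
move=> i j /(congr1 val) /= e /eqP nij.
have nij' : nat_of_ord i <> nat_of_ord j by move=> h; apply: nij; apply: val_inj.
move: e; rewrite -!divn2 => e.
have : (nat_of_ord j = i + 1 \/ nat_of_ord i = j + 1)%N by lia.
case=> h; first by apply: cycle_succ.
by rewrite cycle_sym; apply: cycle_succ.
Qed.

Lemma code_cocycle_even n : (4 <= n)%N -> ~~ odd n -> solvable_in 1 (@cocycle_graph n) 2.
Proof.
move=> n4 ev.
have hm : forall i : nat, (i %% 2 < 2)%N by move=> i; rewrite ltn_pmod.
apply: (@clique_cover_solvable n 2 _ (fun i => Ordinal (hm i))).
move=> i j /(congr1 val) /= e nij; rewrite /cocycle_graph nij /=.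
have nij' : nat_of_ord i <> nat_of_ord j by move=> h; move/eqP: nij; apply; apply: val_inj.
have hn : (n %% 2 = 0)%N by rewrite modn2 (negbTE ev).
apply/negP => /cycle_inv H; have := ltn_ord i; have := ltn_ord j; lia.
Qed.

Definition cls3 n (i : nat) : nat := if (i == n - 1)%N then 2%N else (i %% 2)%N.

Lemma cls3_lt n i : (cls3 n i < 3)%N.
Proof. rewrite /cls3; case: ifP => // _; have := ltn_pmod i (isT : 0 < 2)%N; lia. Qed.

Lemma code_cocycle_odd3 n : (4 <= n)%N -> odd n -> solvable_in 1 (@cocycle_graph n) 3.
Proof.
move=> n4 od.
apply: (@clique_cover_solvable n 3 _ (fun i => Ordinal (cls3_lt n i))).
move=> i j /(congr1 val) /= e nij; rewrite /cocycle_graph nij /=.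
have nij' : nat_of_ord i <> nat_of_ord j by move=> h; move/eqP: nij; apply; apply: val_inj.
have hn : (n %% 2 = 1)%N by rewrite modn2 od.
apply/negP => /cycle_inv H; move: e; rewrite /cls3.
have := ltn_ord i; have := ltn_ord j.
case: (nat_of_ord i =P n - 1)%N => ei; case: (nat_of_ord j =P n - 1)%N => ej; lia.
Qed.

Lemma mod2n x n : (x < 2 * n)%N -> (x %% n = if (x < n)%N then x else x - n)%N.
Proof.
move=> h; case: ltnP => h2; first by rewrite modn_small.
have -> : x = (n + (x - n))%N by lia.
by rewrite modnDl modn_small; lia.
Qed.

Lemma code_cocycle_oddm n m : n = (2 * m + 1)%N -> (1 <= m)%N ->
  solvable_in m (@cocycle_graph n) n.
Proof.
move=> hn m1.
have n0 : (0 < n)%N by lia.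
apply: (@xcode_solvable n m n _ (fun b p =>
  (nat_of_ord p.1 == (nat_of_ord b + 2 * nat_of_ord p.2) %% n)%N)).
move=> v r; have hr := ltn_ord r; have hv := ltn_ord v.
exists (Ordinal (ltn_pmod (v + n - 2 * r) n0)); split.
  rewrite /= modnDml.
  have -> : (v + n - 2 * r + 2 * r = n + v)%N by lia.
  by rewrite modnDl modn_small.
move=> [u s] /= /eqP; have hs := ltn_ord s; have hu := ltn_ord u.
rewrite (mod2n (x := (v + n - 2 * r)%N)); last by lia.
case: ifP => h1; rewrite mod2n; try lia; case: ifP => h2 eu.
all: case: (nat_of_ord s =P nat_of_ord r) => esr.
all: try (left; congr pair; apply: val_inj => /=; lia).
all: right; rewrite /cocycle_graph; apply/andP; split;
  [apply/eqP => e; have := congr1 val e => /=; lia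
  |apply/negP => /cycle_inv H; lia].
Qed.

End M7.
Import M7.

Module M8.
Set Implicit Arguments. Unset Strict Implicit. Unset Printing Implicit Defensive.
Import Order.TTheory GRing.Theory Num.Theory.
Local Open Scope ring_scope.

Lemma beta_t_le n (G : rel 'I_n) t k : solvable_in t G k -> (beta_t G t <= k)%N.
Proof. by rewrite /beta_t; case: ex_minnP => b _ hmin; apply: hmin. Qed.

Lemma beta_t_sol n (G : rel 'I_n) t : solvable_in t G (beta_t G t).
Proof. by rewrite /beta_t; case: ex_minnP. Qed.

Lemma ratio_le (R : realType) (a b c d : nat) : (0 < b)%N -> (0 < d)%N ->
  (a * d <= c * b)%N -> a%:R / b%:R <= c%:R / d%:R :> R.
Proof.
move=> b0 d0 h.
rewrite ler_pdivrMr ?ltr0n // mulrAC ler_pdivlMr ?ltr0n // -!natrM ler_nat.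
nia.
Qed.

Lemma ratio_eq (R : realType) (a b c d : nat) : (0 < b)%N -> (0 < d)%N ->
  (a * d = c * b)%N -> a%:R / b%:R = c%:R / d%:R :> R.
Proof.
move=> b0 d0 h; apply/eqP; rewrite eq_le !ratio_le //; first by rewrite h.
by rewrite h.
Qed.

Lemma beta_eq (R : realType) n (G : rel 'I_n) (v : R) t0 : (0 < t0)%N ->
  (beta_t G t0)%:R / t0%:R = v ->
  (forall t, (0 < t)%N -> v <= (beta_t G t)%:R / t%:R) -> beta R G = v.
Proof.
move=> t0p e hlb; rewrite /beta.
set S := (X in inf X = _).
have Sv : S v by exists t0.
have lbv : lbound S v by move=> x [t tp <-]; apply: hlb.
apply/eqP; rewrite eq_le; apply/andP; split.
  by have := ge_inf (ex_intro _ v lbv); apply.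
by apply: lb_le_inf => //; exists v.
Qed.

Lemma ratio_ge_nat (R : realType) (a b c : nat) : (0 < b)%N -> (c * b <= a)%N ->
  c%:R <= a%:R / b%:R :> R.
Proof. by move=> b0 h; rewrite ler_pdivlMr ?ltr0n // -natrM ler_nat. Qed.

Lemma ratio_le_nat (R : realType) (a b c : nat) : (0 < b)%N -> (a <= c * b)%N ->
  a%:R / b%:R <= c%:R :> R.
Proof. by move=> b0 h; rewrite ler_pdivrMr ?ltr0n // -natrM ler_nat. Qed.

Lemma ratio_lt_nat (R : realType) (a b c : nat) : (0 < b)%N -> (a < c * b)%N ->
  a%:R / b%:R < c%:R :> R.
Proof. by move=> b0 h; rewrite ltr_pdivrMr ?ltr0n // -natrM ltr_nat. Qed.

Lemma ratio_gt_nat (R : realType) (a b c : nat) : (0 < b)%N -> (c * b < a)%N ->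
  c%:R < a%:R / b%:R :> R.
Proof. by move=> b0 h; rewrite ltr_pdivlMr ?ltr0n // -natrM ltr_nat. Qed.

Lemma ceil_nat (R : realType) (x : R) (u : nat) : (1 <= u)%N ->
  (u - 1)%:R < x -> x <= u%:R -> Num.ceil x = u%:Z.
Proof.
move=> u1 h1 h2; apply: ceil_def; rewrite intrD -!pmulrn intrN -natrB //.
by rewrite h1 h2.
Qed.

Lemma floor_nat (R : realType) (x : R) (u : nat) :
  u%:R <= x -> x < (u + 1)%:R -> Num.floor x = u%:Z.
Proof.
move=> h1 h2; apply: floor_def; rewrite intrD -!pmulrn -natrD.
by rewrite h1 h2.
Qed.

Lemma indep_of n (G : rel 'I_n) (S : {set 'I_n}) : independent G S ->
  forall v, v \in S -> forall j, G v j -> j \notin S.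
Proof.
move=> /forallP hS v vS j gvj; apply/negP => jS.
by have := hS v; rewrite vS /= => /forallP /(_ j); rewrite jS gvj.
Qed.

Section Cyc.
Variables (R : realType) (n : nat) (hn : (4 <= n)%N).

Definition evens : {set 'I_n} := [set i : 'I_n | (i %% 2 == 0) && (i < 2 * n./2)]%N.

Lemma evens_card : (n./2 <= #|evens|)%N.
Proof.
have c := cardsC evens; rewrite card_ord in c.
have : (#|~: evens| <= n - n./2)%N.
  apply: (card_le (f := fun i => (i %/ 2)%N)) => [i j|i]; rewrite /evens !inE -!divn2;
    have := ltn_ord i; [have := ltn_ord j|]; lia.
lia.
Qed.

Lemma evens_indep : independent (@cycle_graph n) evens.
Proof.
apply/forallP => i; apply/implyP => iS; apply/forallP => j; apply/implyP => jS.
apply/negP => /cycle_inv H; move: iS jS; rewrite /evens !inE -!divn2.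
by have := ltn_ord i; have := ltn_ord j; lia.
Qed.

Lemma cyc_lb t : (0 < t)%N -> (t * n <= 2 * beta_t (@cycle_graph n) t)%N.
Proof.
move=> t0; have sol := beta_t_sol (@cycle_graph n) t.
case: (boolP (odd n)) => od.
  have hm : (n %% 2 = 1)%N by rewrite modn2 od.
  apply: (lb_cycle_odd R (m := n./2)) => //.
    by rewrite -divn2; lia.
  by rewrite -divn2; lia.
have [E hE] := solvable_inP sol.
have := indep_bound R hE (indep_of evens_indep).
have := evens_card.
have hm : (n %% 2 = 0)%N by rewrite modn2 (negbTE od).
have e : n = (2 * n./2)%N by rewrite -divn2; lia.
move=> h1 h2; rewrite {1}e; nia.
Qed.

Lemma cyc_beta2 : beta_t (@cycle_graph n) 2 = n.
Proof.
apply/eqP; rewrite eqn_leq beta_t_le ?code_cycle2 //=; last by lia.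
by have := cyc_lb (isT : (0 < 2)%N); lia.
Qed.

Lemma cyc_beta1 : beta_t (@cycle_graph n) 1 = uphalf n.
Proof.
apply/eqP; rewrite eqn_leq beta_t_le ?code_cycle1 //=.
by have := cyc_lb (isT : (0 < 1)%N); rewrite uphalfE -divn2; lia.
Qed.

Lemma cyc_beta : beta R (@cycle_graph n) = n%:R / 2.
Proof.
apply: (beta_eq (t0 := 2)) => //; first by rewrite cyc_beta2.
move=> t t0; apply: ratio_le => //; have := cyc_lb t0; lia.
Qed.

Lemma cyc_alpha : alpha (@cycle_graph n) = n./2.
Proof.
apply/eqP; rewrite eqn_leq; apply/andP; split.
  apply/bigmax_leqP => S hS.
  have [E hE] := solvable_inP (code_cycle2 (ltnW hn)).
  have := indep_bound R hE (indep_of hS); rewrite -divn2; lia.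
apply: leq_trans evens_card _; exact: leq_bigmax_cond evens_indep.
Qed.

End Cyc.

End M8.
Import M8.

Module M9.
Set Implicit Arguments. Unset Strict Implicit. Unset Printing Implicit Defensive.
Import Order.TTheory GRing.Theory Num.Theory.
Local Open Scope ring_scope.

Section CoCyc.
Variables (R : realType) (n : nat) (hn : (4 <= n)%N).

Definition pairS : {set 'I_n} := [set i : 'I_n | (i <= 1)%N].

Lemma pairS_card : (2 <= #|pairS|)%N.
Proof.
have c := cardsC pairS; rewrite card_ord in c.
have : (#|~: pairS| <= n - 2)%N.
  apply: (card_le (f := fun i => (i - 2)%N)) => [i j|i]; rewrite /pairS !inE;
    have := ltn_ord i; [have := ltn_ord j|]; lia.
lia.
Qed.

Lemma pairS_indep : independent (@cocycle_graph n) pairS.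
Proof.
apply/forallP => i; apply/implyP => iS; apply/forallP => j; apply/implyP => jS.
move: iS jS; rewrite /pairS !inE => iS jS.
rewrite /cocycle_graph negb_and !negbK; case: (eqVneq i j) => [//|nij] /=.
have nij' : nat_of_ord i <> nat_of_ord j by move=> h; move/eqP: nij; apply; apply: val_inj.
have : (nat_of_ord j = i + 1 \/ nat_of_ord i = j + 1)%N by lia.
case=> h; first by apply: cycle_succ.
by rewrite cycle_sym; apply: cycle_succ.
Qed.

Lemma cocyc_lb t : (0 < t)%N -> (t * n <= n./2 * beta_t (@cocycle_graph n) t)%N.
Proof.
move=> t0; have sol := beta_t_sol (@cocycle_graph n) t.
case: (boolP (odd n)) => od.
  have hm : (n %% 2 = 1)%N by rewrite modn2 od.
  apply: (lb_cocycle_odd R) => //.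
    by rewrite -divn2; lia.
  by rewrite -divn2; lia.
have [E hE] := solvable_inP sol.
have := indep_bound R hE (indep_of pairS_indep).
have := pairS_card.
have hm : (n %% 2 = 0)%N by rewrite modn2 (negbTE od).
have e : n = (2 * n./2)%N by rewrite -divn2; lia.
move=> h1 h2; rewrite {1}e; nia.
Qed.

Lemma cocyc_beta_t0 : exists t0, (0 < t0)%N /\
  (beta_t (@cocycle_graph n) t0)%:R / t0%:R = n%:R / (n./2)%:R :> R.
Proof.
case: (boolP (odd n)) => od.
  have hm : (n %% 2 = 1)%N by rewrite modn2 od.
  exists n./2; split; first by rewrite -divn2; lia.
  have b : beta_t (@cocycle_graph n) n./2 = n.
    apply/eqP; rewrite eqn_leq beta_t_le ?(@code_cocycle_oddm n n./2) //=;
      try by rewrite -divn2; lia.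
    have := @cocyc_lb n./2; rewrite -divn2 => h.
    have := h ltac:(lia); nia.
  by rewrite b.
have hm : (n %% 2 = 0)%N by rewrite modn2 (negbTE od).
exists 1%N; split => //.
have b : beta_t (@cocycle_graph n) 1 = 2%N.
  apply/eqP; rewrite eqn_leq beta_t_le ?code_cocycle_even //=.
  have := @cocyc_lb 1 isT; rewrite -divn2 => h; nia.
rewrite b; apply: ratio_eq => //; rewrite -divn2; lia.
Qed.

Lemma cocyc_beta : beta R (@cocycle_graph n) = n%:R / (n./2)%:R.
Proof.
have [t0 [t0p e]] := cocyc_beta_t0.
apply: (beta_eq t0p e) => t tp; apply: ratio_le => //; first by rewrite -divn2; lia.
have := cocyc_lb tp; lia.
Qed.

Lemma cocyc_beta1 : beta_t (@cocycle_graph n) 1 = (if odd n then 3 else 2)%N.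
Proof.
case: (boolP (odd n)) => od.
  have hm : (n %% 2 = 1)%N by rewrite modn2 od.
  apply/eqP; rewrite eqn_leq beta_t_le ?code_cocycle_odd3 //=.
  have := @cocyc_lb 1 isT; rewrite -divn2 => h; nia.
have hm : (n %% 2 = 0)%N by rewrite modn2 (negbTE od).
apply/eqP; rewrite eqn_leq beta_t_le ?code_cocycle_even //=.
have := @cocyc_lb 1 isT; rewrite -divn2 => h; nia.
Qed.

Lemma cocyc_alpha : alpha (@cocycle_graph n) = 2%N.
Proof.
apply/eqP; rewrite eqn_leq; apply/andP; split.
  apply/bigmax_leqP => S hS.
  case: (boolP (odd n)) => od.
    have hm : (n %% 2 = 1)%N by rewrite modn2 od.
    have [E hE] := solvable_inP (@code_cocycle_oddm n n./2 ltac:(rewrite -divn2; lia)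
                                   ltac:(rewrite -divn2; lia)).
    have := indep_bound R hE (indep_of hS); rewrite -divn2; nia.
  have [E hE] := solvable_inP (code_cocycle_even hn od).
  have := indep_bound R hE (indep_of hS); lia.
apply: leq_trans pairS_card _; exact: leq_bigmax_cond pairS_indep.
Qed.

End CoCyc.


End M9.
Import M9.

Unset Implicit Arguments.
Local Open Scope ring_scope.

Theorem theorem5p1 (R : realType) (n : nat) (hn : (4 <= n)%N) :
  [/\ beta R (@cycle_graph n) = n%:R / 2,
      (beta_t (@cycle_graph n) 1)%:Z = Num.ceil (beta R (@cycle_graph n))
    & (alpha (@cycle_graph n))%:Z = Num.floor (beta R (@cycle_graph n))] /\
  [/\ beta R (@cocycle_graph n) = n%:R / (n./2)%:R,
      (beta_t (@cocycle_graph n) 1)%:Z = Num.ceil (beta R (@cocycle_graph n))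
    & (alpha (@cocycle_graph n))%:Z = Num.floor (beta R (@cocycle_graph n))].
Proof.
have m0 : (0 < n./2)%N by rewrite -divn2; lia.
split; split.
- exact: cyc_beta.
- rewrite (cyc_beta R hn) (cyc_beta1 R hn); symmetry; apply: ceil_nat.
  + by rewrite uphalfE -divn2; lia.
  + by apply: ratio_gt_nat => //; rewrite uphalfE -divn2; lia.
  + by apply: ratio_le_nat => //; rewrite uphalfE -divn2; lia.
- rewrite (cyc_beta R hn) (cyc_alpha R hn); symmetry; apply: floor_nat.
  + by apply: ratio_ge_nat => //; rewrite -divn2; lia.
  + by apply: ratio_lt_nat => //; rewrite -divn2; lia.
- exact: cocyc_beta.
- rewrite (cocyc_beta R hn) (cocyc_beta1 R hn); symmetry; apply: ceil_nat.
  + by case: ifP.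
  + apply: ratio_gt_nat => //; case: (boolP (odd n)) => od.
      have : (n %% 2 = 1)%N by rewrite modn2 od.
      rewrite -divn2; lia.
    have : (n %% 2 = 0)%N by rewrite modn2 (negbTE od).
    rewrite -divn2; lia.
  + apply: ratio_le_nat => //; case: (boolP (odd n)) => od.
      have : (n %% 2 = 1)%N by rewrite modn2 od.
      rewrite -divn2; lia.
    have : (n %% 2 = 0)%N by rewrite modn2 (negbTE od).
    rewrite -divn2; lia.
- rewrite (cocyc_beta R hn) (cocyc_alpha R hn); symmetry; apply: floor_nat.
  + apply: ratio_ge_nat => //; rewrite -divn2; lia.
  + apply: ratio_lt_nat => //; case: (boolP (odd n)) => od.
      have : (n %% 2 = 1)%N by rewrite modn2 od.
      rewrite -divn2; lia.
    have : (n %% 2 = 0)%N by rewrite modn2 (negbTE od).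
    rewrite -divn2; lia.
Qed.
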